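(* Let $A\in M_2(\mathbb F)$ be normal and let $P(A)=\{B\in M_2(\mathbb F): B \text{ normal and } A+B \text{ normal}\}$. Then $\mathrm{Span}_{\mathbb R}P(A)=M_2(\mathbb F)$ if and only if $A\in\mathbb F I$.
   Context: $\mathbb F$ is $\mathbb C$ or $\mathbb R$; a matrix $N$ is normal if $N^*N=NN^*$, where $N^*$ is the conjugate transpose (transpose if real). *)

(* Defs.v *)
(* F = R is modelled by an arbitrary realType R, F = C by the
   complex numbers R[i] (mathcomp-real-closed) over a realType R. *)
From HB Require Import structures.
From mathcomp Require Import all_boot all_order all_algebra.
From mathcomp Require Import reals.
From mathcomp Require Import complex.
Set Implicit Arguments. Unset Strict Implicit. Unset Printing Implicit Defensive.
Import Order.TTheory GRing.Theory Num.Theory.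
Local Open Scope ring_scope.

Definition cadj (R : rcfType) (n : nat) (A : 'M[R[i]]_n) : 'M[R[i]]_n :=
  (map_mx (fun z : R[i] => z^*) A)^T.

Definition normal_C (R : rcfType) (n : nat) (A : 'M[R[i]]_n) : Prop :=
  cadj A *m A = A *m cadj A.
Definition normal_R (R : realType) (n : nat) (A : 'M[R]_n) : Prop :=
  A^T *m A = A *m A^T.

Definition P_C (R : rcfType) (n : nat) (A : 'M[R[i]]_n) : 'M[R[i]]_n -> Prop :=
  fun B => normal_C B /\ normal_C (A + B).
Definition P_R (R : realType) (n : nat) (A : 'M[R]_n) : 'M[R]_n -> Prop :=
  fun B => normal_R B /\ normal_R (A + B).

Definition in_real_span (F : numDomainType) (m n : nat)
  (S : 'M[F]_(m, n) -> Prop) (M : 'M[F]_(m, n)) : Prop :=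
  exists (k : nat) (c : 'I_k -> F) (B : 'I_k -> 'M[F]_(m, n)),
    (forall j, c j \is Num.real) /\ (forall j, S (B j)) /\
    M = \sum_(j < k) c j *: B j.

Definition real_span_full (F : numDomainType) (m n : nat)
  (S : 'M[F]_(m, n) -> Prop) : Prop :=
  forall M : 'M[F]_(m, n), in_real_span S M.

(* Main.v *)
Require Import Defs.
From HB Require Import structures.
From mathcomp Require Import all_boot all_order all_algebra.
From mathcomp Require Import reals.
From mathcomp Require Import complex ring.
Import Order.TTheory GRing.Theory Num.Theory.
Local Open Scope ring_scope.

Section Cx.
Variable R : rcfType.
Local Notation M2 := 'M[R[i]]_2.

Lemma cadjD (X Y : M2) : cadj (X + Y) = cadj X + cadj Y.
Proof. by apply/matrixP=> i j; rewrite !mxE rmorphD. Qed.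
Lemma cadjN (X : M2) : cadj (- X) = - cadj X.
Proof. by apply/matrixP=> i j; rewrite !mxE rmorphN. Qed.
Lemma cadjZ c (X : M2) : cadj (c *: X) = c^* *: cadj X.
Proof. by apply/matrixP=> i j; rewrite !mxE rmorphM. Qed.
Lemma cadj0 : cadj (0 : M2) = 0.
Proof. by apply/matrixP=> i j; rewrite !mxE ?rmorph0. Qed.
Lemma cadjK (X : M2) : cadj (cadj X) = X.
Proof. by apply/matrixP=> i j; rewrite !mxE conjCK. Qed.
Lemma cadj_scalar a : cadj (a%:M : M2) = a^*%:M.
Proof.
apply/matrixP=> i j; rewrite !mxE eq_sym; case: (i == j); rewrite ?mulr1n ?mulr0n //.
by rewrite conjC0.
Qed.

Definition LC (A B : M2) :=
  cadj A *m B - B *m cadj A + (cadj B *m A - A *m cadj B).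

Lemma LC_expand (A B : M2) :
  cadj (A + B) *m (A + B) - (A + B) *m cadj (A + B) =
  (cadj A *m A - A *m cadj A) + (cadj B *m B - B *m cadj B) + LC A B.
Proof.
rewrite /LC cadjD !mulmxDl !mulmxDr.
apply/matrixP=> i j; rewrite !mxE; ring.
Qed.

Lemma LC_ker (A B : M2) : normal_C A -> normal_C B -> normal_C (A + B) ->
  LC A B = 0.
Proof.
move=> nA nB nAB; have := LC_expand A B.
by rewrite /normal_C in nA nB nAB; rewrite nA nB nAB !subrr !add0r.
Qed.

Lemma LCD (A X Y : M2) : LC A (X + Y) = LC A X + LC A Y.
Proof.
rewrite /LC cadjD !mulmxDl !mulmxDr.
apply/matrixP=> i j; rewrite !mxE; ring.
Qed.

Lemma LCZ (A X : M2) c : LC A (c *: X) = c *: (cadj A *m X - X *m cadj A)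
   + c^* *: (cadj X *m A - A *m cadj X).
Proof.
rewrite /LC cadjZ -!scalemxAl -!scalemxAr.
apply/matrixP=> i j; rewrite !mxE; ring.
Qed.

Lemma LC0 (A : M2) : LC A 0 = 0.
Proof. by rewrite /LC cadj0 !mul0mx !mulmx0 subrr addr0. Qed.

Lemma LC_scalar a (B : M2) : LC a%:M B = 0.
Proof. by rewrite /LC cadj_scalar !scalar_mxC !subrr addr0. Qed.

Lemma span_LC (A M : M2) : normal_C A -> in_real_span (P_C A) M -> LC A M = 0.
Proof.
move=> nA [k [c [B [cr [PB ->]]]]].
apply: (big_rec (fun x => LC A x = 0)); first exact: LC0.
move=> j x _ hx; rewrite LCD hx addr0 LCZ (conj_Creal (cr j)) -scalerDr.
have [nB nAB] := PB j.
by have := LC_ker _ _ nA nB nAB; rewrite /LC => ->; rewrite scaler0.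
Qed.

Lemma comm_scalar (X : M2) :
  X *m delta_mx 0 0 - delta_mx 0 0 *m X = 0 ->
  X *m delta_mx 0 1 - delta_mx 0 1 *m X = 0 -> X = (X 0 0)%:M.
Proof.
move=> /matrixP h1 /matrixP h2.
have a1 := h1 0 1; have a2 := h1 1 0; have a3 := h2 0 1.
move: a1 a2 a3; rewrite !mxE !big_ord_recl !big_ord0 !mxE /=.
have l1 : lift ord0 ord0 = 1 :> 'I_2 by apply: val_inj.
have l0 : ord0 = 0 :> 'I_2 by apply: val_inj.
move=> a1 a2 a3.
rewrite l1 l0 !(mulr0, mul0r, mulr1, mul1r, addr0, add0r, subr0, sub0r) in a1 a2 a3.
move/eqP: a1; rewrite oppr_eq0 => /eqP a1.
move/eqP: a3; rewrite subr_eq0 => /eqP a3.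
apply/matrixP=> i j; rewrite !mxE.
case: i => [[|[|//]] pi]; case: j => [[|[|//]] pj] /=.
- by rewrite mulr1n; congr (X _ _); apply: val_inj.
- by rewrite mulr0n -a1; congr (X _ _); apply: val_inj.
- by rewrite mulr0n -a2; congr (X _ _); apply: val_inj.
- by rewrite mulr1n a3; congr (X _ _); apply: val_inj.
Qed.


Lemma normal_add_scalar a (B : M2) : normal_C B -> normal_C (a%:M + B).
Proof.
move=> nB; rewrite /normal_C; apply/eqP; rewrite -subr_eq0 LC_expand LC_scalar.
rewrite cadj_scalar scalar_mxC subrr add0r addr0 subr_eq0; exact/eqP.
Qed.

Lemma complex_part (A : M2) : normal_C A ->
  (real_span_full (P_C A) <-> exists a, A = a%:M).
Proof.
move=> nA; split.
- move=> full.
  have key : forall M, LC A M = 0 := fun M => span_LC _ _ nA (full M).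
  set X := cadj A.
  have U0 : forall M, X *m M - M *m X = 0.
    move=> M; have h1 := key M; have h2 := key ('i *: M).
    rewrite LCZ conjCi in h2; rewrite /LC -/X in h1 h2.
    move: h1 h2; set U := X *m M - M *m X; set V := (cadj M *m A - _) => h1 h2.
    have hV : V = - U.
      by apply/eqP; rewrite -addr_eq0 addrC h1.
    move/eqP: h2; rewrite hV scaleNr scalerN opprK -scalerDr -mulr2n -scaler_nat.
    rewrite !scaler_eq0 pnatr_eq0 /=.
    case/orP => /eqP hi //; exfalso; move: hi => [] /eqP; by rewrite oner_eq0.
  have hX := comm_scalar _ (U0 _) (U0 _).
  by exists ((X 0 0)^*); rewrite -[A]cadjK -/X {1}hX cadj_scalar.
- case=> a ->{A nA} M.
  exists 2%N, (fun _ => 2^-1),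
    (fun j => if val j == 0%N then M + cadj M else M - cadj M).
  split; first by move=> j; rewrite rpredV realn.
  split.
    move=> j; case: ifP => _; split; try apply: normal_add_scalar.
    + by rewrite /normal_C cadjD cadjK addrC.
    + by rewrite /normal_C cadjD cadjK addrC.
    + by rewrite /normal_C cadjD cadjN cadjK -[cadj M - M]opprB mulNmx mulmxN.
    + by rewrite /normal_C cadjD cadjN cadjK -[cadj M - M]opprB mulNmx mulmxN.
  rewrite !big_ord_recl big_ord0 /= addr0.
  apply/matrixP=> i j; rewrite !mxE; field.
  by [].
Qed.
End Cx.

From mathcomp Require Import lra.

Section Rl.
Variable R : realType.
Local Notation M2 := 'M[R]_2.

Lemma trD (X Y : M2) : (X + Y)^T = X^T + Y^T.
Proof. by apply/matrixP=> i j; rewrite !mxE. Qed.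
Lemma trN (X : M2) : (- X)^T = - X^T.
Proof. by apply/matrixP=> i j; rewrite !mxE. Qed.
Lemma trZ c (X : M2) : (c *: X)^T = c *: X^T.
Proof. by apply/matrixP=> i j; rewrite !mxE. Qed.
Lemma tr0 : (0 : M2)^T = 0.
Proof. by apply/matrixP=> i j; rewrite !mxE. Qed.

Definition LR (A B : M2) :=
  A^T *m B - B *m A^T + (B^T *m A - A *m B^T).

Lemma LR_expand (A B : M2) :
  (A + B)^T *m (A + B) - (A + B) *m (A + B)^T =
  (A^T *m A - A *m A^T) + (B^T *m B - B *m B^T) + LR A B.
Proof.
rewrite /LR trD !mulmxDl !mulmxDr.
apply/matrixP=> i j; rewrite !mxE; ring.
Qed.

Lemma LR_ker (A B : M2) : normal_R A -> normal_R B -> normal_R (A + B) ->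
  LR A B = 0.
Proof.
move=> nA nB nAB; have := LR_expand A B.
by rewrite /normal_R in nA nB nAB; rewrite nA nB nAB !subrr !add0r.
Qed.

Lemma LRD (A X Y : M2) : LR A (X + Y) = LR A X + LR A Y.
Proof.
rewrite /LR trD !mulmxDl !mulmxDr.
apply/matrixP=> i j; rewrite !mxE; ring.
Qed.

Lemma LRZ (A X : M2) c : LR A (c *: X) = c *: LR A X.
Proof.
rewrite /LR trZ -!scalemxAl -!scalemxAr.
apply/matrixP=> i j; rewrite !mxE; ring.
Qed.

Lemma LR0 (A : M2) : LR A 0 = 0.
Proof. by rewrite /LR tr0 !mul0mx !mulmx0 subrr addr0. Qed.

Lemma LR_scalar a (B : M2) : LR a%:M B = 0.
Proof. by rewrite /LR tr_scalar_mx !scalar_mxC !subrr addr0. Qed.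

Lemma span_LR (A M : M2) : normal_R A -> in_real_span (P_R A) M -> LR A M = 0.
Proof.
move=> nA [k [c [B [cr [PB ->]]]]].
apply: (big_rec (fun x => LR A x = 0)); first exact: LR0.
move=> j x _ hx; rewrite LRD hx addr0 LRZ.
have [nB nAB] := PB j.
by rewrite (LR_ker _ _ nA nB nAB) scaler0.
Qed.

Lemma normal_add_scalarR a (B : M2) : normal_R B -> normal_R (a%:M + B).
Proof.
move=> nB; rewrite /normal_R; apply/eqP; rewrite -subr_eq0 LR_expand LR_scalar.
rewrite tr_scalar_mx scalar_mxC subrr add0r addr0 subr_eq0; exact/eqP.
Qed.

Lemma real_part (A : M2) : normal_R A ->
  (real_span_full (P_R A) <-> exists a, A = a%:M).
Proof.
move=> nA; split.
- move=> full.
  have key : forall M, LR A M = 0 := fun M => span_LR _ _ nA (full M).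
  have /matrixP h1 := key (delta_mx 0 0).
  have /matrixP h2 := key (delta_mx 0 1).
  have a1 := h1 0 1; have a2 := h2 0 0; have a3 := h2 0 1.
  move: a1 a2 a3; rewrite !mxE !big_ord_recl !big_ord0 !mxE /= => a1 a2 a3.
  have l1 : lift ord0 ord0 = 1 :> 'I_2 by apply: val_inj.
  have l0 : ord0 = 0 :> 'I_2 by apply: val_inj.
  rewrite ?l1 ?l0 in a1 a2 a3.
  have e01 : A 0 1 = 0 by lra.
  have e10 : A 1 0 = 0 by lra.
  have e11 : A 1 1 = A 0 0 by lra.
  exists (A 0 0); apply/matrixP=> i j; rewrite !mxE.
  case: i => [[|[|//]] pi]; case: j => [[|[|//]] pj] /=.
  + by rewrite mulr1n; congr (A _ _); apply: val_inj.
  + by rewrite mulr0n -e01; congr (A _ _); apply: val_inj.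
  + by rewrite mulr0n -e10; congr (A _ _); apply: val_inj.
  + by rewrite mulr1n -e11; congr (A _ _); apply: val_inj.
- case=> a ->{A nA} M.
  exists 2%N, (fun _ => 2^-1),
    (fun j => if val j == 0%N then M + M^T else M - M^T).
  split; first by move=> j; apply: num_real.
  split.
    move=> j; case: ifP => _; split; try apply: normal_add_scalarR.
    + by rewrite /normal_R trD trmxK addrC.
    + by rewrite /normal_R trD trmxK addrC.
    + by rewrite /normal_R trD trN trmxK -[M^T - M]opprB mulNmx mulmxN.
    + by rewrite /normal_R trD trN trmxK -[M^T - M]opprB mulNmx mulmxN.
  rewrite !big_ord_recl big_ord0 /= addr0.
  apply/matrixP=> i j; rewrite !mxE; field.
  by [].
Qed.
End Rl.

Theorem mainTheorem12 :
  (forall (R : realType) (A : 'M[R]_2), normal_R A ->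
     (real_span_full (P_R A) <-> exists a : R, A = a%:M)) /\
  (forall (R : realType) (A : 'M[R[i]]_2), normal_C A ->
     (real_span_full (P_C A) <-> exists a : R[i], A = a%:M)).
Proof.
split; [exact: real_part | move=> R A; exact: complex_part].
Qed.
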